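(* Let $\mathcal{H}$ be a complex Hilbert space and let $A\in\mathcal{B}(\mathcal{H})$ be a positive operator with $\dim R(A)\ge 2$. Let $T\in\mathcal{B}_A(\mathcal{H})$ and $q\in\mathbb{C}$ with $|q|\le 1$. Then \[ w_{q,A}(T)\le\Big(|q|^2w_A^2(T)+(1-|q|^2)\|T\|_A^2+2|q|\sqrt{1-|q|^2}\,w_A(T)\|T\|_A\Big)^{1/2}. \]
   Context: $A$ induces the semi-inner product $\langle x,y\rangle_A=\langle Ax,y\rangle$ and seminorm $\|x\|_A=\sqrt{\langle x,x\rangle_A}$. For an operator $S$, $\|S\|_A=\sup\{\|Sx\|_A/\|x\|_A : x\in\overline{R(A)},\,x\neq 0\}$. $\mathcal{B}_A(\mathcal{H})$ is the set of operators $T$ admitting an $A$-adjoint, i.e. an operator $W$ with $\langle Tx,y\rangle_A=\langle x,Wy\rangle_A$ for all $x,y$. The $A$-$q$-numerical radius is $w_{q,A}(T)=\sup\{|\langle Tx,y\rangle_A| : \|x\|_A=\|y\|_A=1,\ \langle x,y\rangle_A=q\}$, and $w_A(T)=w_{1,A}(T)=\sup\{|\langle Tx,x\rangle_A|:\|x\|_A=1\}$ is the $A$-numerical radius. *)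

(* Defs.v *)
From HB Require Import structures.
From mathcomp Require Import all_boot all_order all_algebra.
From mathcomp Require Import complex.
From mathcomp Require Import boolp classical_sets reals.

Set Implicit Arguments.
Unset Strict Implicit.
Unset Printing Implicit Defensive.

Import Order.TTheory GRing.Theory Num.Theory.
Local Open Scope ring_scope.
Local Open Scope classical_set_scope.

Section Hilbert.
Variable R : realType.
Variable H : lmodType R[i].
Variable ip : H -> H -> R[i].   (* inner product <x,y>, linear in x *)

Definition cabs (z : R[i]) : R := Normc.normc z.

Definition is_inner_product : Prop :=
  [/\ (forall (a : R[i]) (x y z : H), ip (a *: x + y) z = a * ip x z + ip y z),
      (forall x y : H, ip y x = conjc (ip x y)),
      (forall x : H, 0 <= ip x x) &
      (forall x : H, ip x x = 0 -> x = 0)].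

Definition hnorm (x : H) : R := Num.sqrt (complex.Re (ip x x)).

Definition is_complete : Prop :=
  forall u : nat -> H,
    (forall e : R, 0 < e -> exists N : nat, forall m n : nat,
        (N <= m)%N -> (N <= n)%N -> hnorm (u m - u n) < e) ->
    exists l : H, forall e : R, 0 < e -> exists N : nat, forall n : nat,
        (N <= n)%N -> hnorm (u n - l) < e.

Definition is_hilbert : Prop := is_inner_product /\ is_complete.

Definition bounded_op (T : H -> H) : Prop :=
  (forall (a : R[i]) (x y : H), T (a *: x + y) = a *: T x + T y) /\
  (exists M : R, forall x : H, hnorm (T x) <= M * hnorm x).

Definition positive_op (A : H -> H) : Prop := forall x : H, 0 <= ip (A x) x.

Definition range_dim_ge2 (A : H -> H) : Prop :=
  exists u v : H, (exists x, u = A x) /\ (exists y, v = A y) /\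
    (forall a b : R[i], a *: u + b *: v = 0 -> a = 0 /\ b = 0).

Definition in_closure_range (A : H -> H) (x : H) : Prop :=
  forall e : R, 0 < e -> exists y : H, hnorm (x - A y) < e.

Variable A : H -> H.

Definition ipA (x y : H) : R[i] := ip (A x) y.

Definition normA (x : H) : R := Num.sqrt (complex.Re (ipA x x)).

Definition opnormA (S : H -> H) : R :=
  sup [set r : R | exists x : H,
         [/\ in_closure_range A x, x <> 0 & r = normA (S x) / normA x]].

Definition has_A_adjoint (T : H -> H) : Prop :=
  exists W : H -> H, bounded_op W /\
    forall x y : H, ipA (T x) y = ipA x (W y).

Definition in_BA (T : H -> H) : Prop := bounded_op T /\ has_A_adjoint T.

Definition wqA (q : R[i]) (T : H -> H) : R :=
  sup [set r : R | exists x y : H,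
         [/\ normA x = 1, normA y = 1, ipA x y = q & r = cabs (ipA (T x) y)]].

Definition wA (T : H -> H) : R :=
  sup [set r : R | exists x : H, normA x = 1 /\ r = cabs (ipA (T x) x)].

End Hilbert.

(* Main.v *)
Require Import Defs.
From HB Require Import structures.
From mathcomp Require Import all_boot all_order all_algebra.
From mathcomp Require Import complex.
From mathcomp Require Import boolp classical_sets reals.
From mathcomp Require Import ring lra.
Import Order.TTheory GRing.Theory Num.Theory.
Local Open Scope ring_scope.

Local Open Scope complex_scope.
Set Implicit Arguments.
Unset Strict Implicit.

Section Cplx.
Variable R : realType.
Implicit Types z : R[i].

Lemma normC_cabs z : `|z| = (cabs z)%:C.
Proof. by case: z => a b; rewrite normc_def. Qed.

Lemma cabs_ge0 z : 0 <= cabs z.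
Proof. by case: z => a b; rewrite /cabs /= sqrtr_ge0. Qed.

Lemma cabsM z1 z2 : cabs (z1 * z2) = cabs z1 * cabs z2.
Proof. exact: Normc.normcM. Qed.

Lemma cabsD z1 z2 : cabs (z1 + z2) <= cabs z1 + cabs z2.
Proof. exact: le_normcD. Qed.

Lemma ge0_real z : 0 <= z -> z = (complex.Re z)%:C.
Proof. by case: z => a b; rewrite lecE /= => /andP[/eqP -> _]. Qed.

Lemma ge0_Re z : 0 <= z -> 0 <= complex.Re z.
Proof. by case: z => a b; rewrite lecE /= => /andP[_]. Qed.

Lemma conj_ge0' z : 0 <= z -> conjc z = z.
Proof. by move=> /ge0_real ->; rewrite conjc_real. Qed.

Lemma cabs_sqr z : ((cabs z) ^+ 2)%:C = z * conjc z.
Proof. by rewrite -sqr_normc normC_cabs rmorphXn. Qed.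

Lemma Re_le_cabs z : complex.Re z <= cabs z.
Proof.
have := normc_ge_Re z; rewrite normC_cabs lecR => h.
exact: le_trans (ler_norm _) h.
Qed.

Lemma cabs_real (r : R) : cabs r%:C = `|r|.
Proof. by rewrite /cabs /= expr0n addr0 sqrtr_sqr. Qed.

Lemma cabs_conj z : cabs (conjc z) = cabs z.
Proof. by case: z => a b; rewrite /cabs /= sqrrN. Qed.

Lemma Re_real (r : R) : complex.Re r%:C = r. Proof. by []. Qed.

Lemma conj_i : conjc 'i%C = - 'i%C :> R[i].
Proof. by apply/eqP; rewrite eq_complex /= oppr0 !eqxx. Qed.

Lemma ii : 'i%C * 'i%C = -1 :> R[i].
Proof. by rewrite -expr2 sqr_i. Qed.

Lemma realCM (u v : R) : (u * v)%:C = u%:C * v%:C :> R[i].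
Proof. exact: rmorphM. Qed.
Lemma realCD (u v : R) : (u + v)%:C = u%:C + v%:C :> R[i].
Proof. exact: rmorphD. Qed.
Lemma realCB (u v : R) : (u - v)%:C = u%:C - v%:C :> R[i].
Proof. exact: rmorphB. Qed.
Lemma realC1 : (1 : R)%:C = 1 :> R[i].
Proof. by []. Qed.
Lemma realCN1 : (-1 : R)%:C = -1 :> R[i].
Proof. exact: rmorphN1. Qed.

Lemma conjcD z1 z2 : conjc (z1 + z2) = conjc z1 + conjc z2.
Proof. exact: rmorphD. Qed.
Lemma conjcB z1 z2 : conjc (z1 - z2) = conjc z1 - conjc z2.
Proof. exact: rmorphB. Qed.
Lemma conjcN z1 : conjc (- z1) = - conjc z1.
Proof. exact: rmorphN. Qed.
Lemma conjcM z1 z2 : conjc (z1 * z2) = conjc z1 * conjc z2.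
Proof. exact: rmorphM. Qed.

Lemma realCMn (u : R) n : (u *+ n)%:C = u%:C *+ n :> R[i].
Proof. exact: rmorphMn. Qed.
Lemma realCX (u : R) n : (u ^+ n)%:C = u%:C ^+ n :> R[i].
Proof. exact: rmorphXn. Qed.

Lemma realC_comb (a b d u u' : R) :
  (a - (u * b) *+ 2 + u' * d)%:C = a%:C - (u%:C * b%:C) *+ 2 + u'%:C * d%:C :> R[i].
Proof. by rewrite realCD realCB realCMn !realCM. Qed.

End Cplx.

Section Form.
Variables (R : realType) (H : lmodType R[i]) (f : H -> H -> R[i]).
Hypothesis flin : forall a x y z, f (a *: x + y) z = a * f x z + f y z.
Hypothesis fherm : forall x y, f y x = conjc (f x y).
Hypothesis fpos : forall x, 0 <= f x x.

Definition nf x := Num.sqrt (complex.Re (f x x)).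

Lemma fDl x y z : f (x + y) z = f x z + f y z.
Proof. by rewrite -[x]scale1r flin mul1r scale1r. Qed.
Lemma f0l z : f 0 z = 0.
Proof. have h := fDl 0 0 z; rewrite addr0 in h. by apply: (addrI (f 0 z)); rewrite addr0 -h. Qed.
Lemma fZl a x z : f (a *: x) z = a * f x z.
Proof. by rewrite -[a *: x]addr0 flin f0l addr0. Qed.
Lemma fNl x z : f (- x) z = - f x z.
Proof. by rewrite -scaleN1r fZl mulN1r. Qed.
Lemma fBl x y z : f (x - y) z = f x z - f y z.
Proof. by rewrite fDl fNl. Qed.
Lemma fDr x y z : f z (x + y) = f z x + f z y.
Proof. by rewrite (fherm (x+y) z) fDl rmorphD (fherm x z) (fherm y z). Qed.
Lemma fZr a x z : f z (a *: x) = conjc a * f z x.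
Proof. by rewrite (fherm (a *: x) z) fZl rmorphM (fherm x z). Qed.
Lemma fNr x z : f z (- x) = - f z x.
Proof. by rewrite (fherm (- x) z) fNl rmorphN (fherm x z). Qed.
Lemma fBr x y z : f z (x - y) = f z x - f z y.
Proof. by rewrite fDr fNr. Qed.
Lemma fconj x : conjc (f x x) = f x x.
Proof. by rewrite -fherm. Qed.

Lemma nf_zero : nf 0 = 0.
Proof. by rewrite /nf f0l sqrtr0. Qed.

Lemma nf_ge0 x : 0 <= nf x. Proof. exact: sqrtr_ge0. Qed.

Lemma ffE x : f x x = (nf x ^+ 2)%:C.
Proof. by rewrite /nf sqr_sqrtr ?ge0_Re // -ge0_real. Qed.

Lemma nf_sqE x : nf x ^+ 2 = complex.Re (f x x).
Proof. by rewrite /nf sqr_sqrtr ?ge0_Re. Qed.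

Lemma nf_uniq x r : 0 <= r -> f x x = (r ^+ 2)%:C -> nf x = r.
Proof. by move=> r0 h; rewrite /nf h Re_real sqrtr_sqr ger0_norm. Qed.

Lemma CS x y : f x y * conjc (f x y) <= f x x * f y y.
Proof.
set a := f x y; set X := f x x; set Y := f y y.
have hyx : f y x = conjc a by rewrite fherm.
have cX : conjc X = X by rewrite fconj.
have cY : conjc Y = Y by rewrite fconj.
have [Ypos|] := boolP (0 < Y).
  have := fpos (Y *: x - a *: y).
  rewrite fBl !fZl !fBr !fZr -/X -/Y -/a hyx cY.
  have -> : Y * (Y * X - conjc a * a) - a * (Y * conjc a - conjc a * Y)
      = Y * (X * Y - a * conjc a) by ring.
  by rewrite pmulr_rge0 // subr_ge0.
rewrite lt_def negb_and negbK (fpos y) orbF => /eqP Y0.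
have [Xpos|] := boolP (0 < X).
  have := fpos (X *: y - conjc a *: x).
  rewrite fBl !fZl !fBr !fZr -/X -/Y -/a hyx cX conjcK.
  have -> : X * (X * Y - a * conjc a) - conjc a * (X * a - a * X)
      = X * (X * Y - a * conjc a) by ring.
  by rewrite pmulr_rge0 // subr_ge0.
rewrite lt_def negb_and negbK (fpos x) orbF => /eqP X0.
have := fpos (x - a *: y).
rewrite fBl !fZl !fBr !fZr -/X -/Y -/a hyx X0 Y0.
have -> : 0 - conjc a * a - a * (conjc a - conjc a * 0) = - ((a * conjc a) *+ 2) by ring.
rewrite oppr_ge0 pmulrn_lle0 // => h.
by rewrite mul0r; apply: h.
Qed.

Lemma CSr x y : cabs (f x y) <= nf x * nf y.
Proof.
have := CS x y. rewrite -(@cabs_sqr _ (f x y)). rewrite !ffE -realCM lecR -exprMn.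
by rewrite ler_pXn2r ?nnegrE ?cabs_ge0 ?mulr_ge0 ?nf_ge0.
Qed.

Lemma nf0_f x y : nf x = 0 -> f x y = 0.
Proof.
move=> h; have := CSr x y; rewrite h mul0r => h2.
have : cabs (f x y) = 0 by apply/le_anti; rewrite h2 cabs_ge0.
exact: Normc.eq0_normc.
Qed.

Lemma nfZ a x : nf (a *: x) = cabs a * nf x.
Proof.
apply: nf_uniq; first by rewrite mulr_ge0 ?cabs_ge0 ?nf_ge0.
have e : ((cabs a * nf x) ^+ 2)%:C = (cabs a ^+ 2)%:C * (nf x ^+ 2)%:C :> R[i].
  by rewrite exprMn realCM.
by rewrite e cabs_sqr fZl fZr ffE; ring.
Qed.

Lemma nfN x : nf (- x) = nf x.
Proof. by rewrite -scaleN1r nfZ -realCN1 cabs_real normrN normr1 mul1r. Qed.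

Lemma nfD x y : nf (x + y) <= nf x + nf y.
Proof.
rewrite -(ler_pXn2r (n := 2)) ?nnegrE ?addr_ge0 ?nf_ge0 //.
have e : (nf (x + y) ^+ 2)%:C = (nf x ^+ 2 + nf y ^+ 2)%:C + (f x y + conjc (f x y)).
  by rewrite -ffE fDl !fDr -fherm !ffE realCD; ring.
have : nf (x + y) ^+ 2 = nf x ^+ 2 + nf y ^+ 2 + complex.Re (f x y) *+ 2.
  have := congr1 (@complex.Re R) e; rewrite Re_real => ->.
  by case: (f x y) => u v /=; rewrite mulr2n.
move=> ->; have := @Re_le_cabs _ (f x y); have := CSr x y.
have := nf_ge0 x; have := nf_ge0 y.
set p := complex.Re _; set c := cabs _; set u := nf x; set v := nf y.
move=> *; rewrite sqrrD; nra.
Qed.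

End Form.

Unset Implicit Arguments.

Section SeqLemma.
Variable R : realType.

Lemma bern (t : R) k : 1 <= t -> 1 + k%:R * (t - 1) <= t ^+ k.
Proof.
move=> t1; elim: k => [|k IH]; first by rewrite mul0r addr0 expr0.
rewrite exprS -natr1.
have hk : 0 <= k%:R :> R by [].
have htk : 0 <= t ^+ k by rewrite exprn_ge0 // (le_trans ler01).
have h1 : 0 <= (t - 1) * (t ^+ k - (1 + k%:R * (t - 1))) by rewrite mulr_ge0 // subr_ge0.
have h2 : 0 <= k%:R * ((t - 1) * (t - 1)) by rewrite mulr_ge0 // mulr_ge0 // subr_ge0.
nra.
Qed.

Lemma seq_bound (a : nat -> R) (K M : R) : 0 <= M -> (forall k, 0 <= a k) ->
  (forall k, a k.+1 ^+ 2 <= a k * a k.+2) -> (forall k, a k <= K * M ^+ k) ->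
  a 1 <= M * a 0.
Proof.
move=> M0 a0 lc bd; rewrite leNgt; apply/negP => hlt.
have a0p : 0 < a 0.
  rewrite lt_def a0 andbT; apply/eqP => e.
  have := lc 0%N; rewrite e mul0r => h.
  have : a 1 = 0 by apply/eqP; rewrite -sqrf_eq0; apply/eqP/le_anti; rewrite h sqr_ge0.
  by move=> e1; move: hlt; rewrite e e1 mulr0 ltxx.
set rho := a 1 / a 0.
have rhoM : M < rho by rewrite ltr_pdivlMr.
have rhoa0 : rho * a 0 = a 1 by rewrite divfK // gt_eqF.
have rho0 : 0 < rho by apply: le_lt_trans rhoM.
have cl : forall k, 0 < a k /\ rho * a k <= a k.+1.
  elim=> [|k [akp ak1]]; first by rewrite rhoa0.
  have ak1p : 0 < a k.+1 by apply: lt_le_trans ak1; rewrite mulr_gt0.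
  split => //.
  have := lc k; have := a0 k.+2; nra.
have pw : forall k, rho ^+ k * a 0 <= a k.
  elim=> [|k IH]; first by rewrite expr0 mul1r.
  have [_ h] := cl k.
  rewrite exprS -mulrA; apply: le_trans h; by rewrite ler_pM2l.
have [M0'|Mp] := eqVneq M 0.
  have := pw 1%N; have := bd 1%N; rewrite M0' expr1 mulr0 expr1 rhoa0 => h1 h2.
  by move: hlt; rewrite M0' mul0r => h3; have := le_trans h2 h1; rewrite leNgt h3.
have Mpos : 0 < M by rewrite lt_def Mp M0.
set t := rho / M.
have t1 : 1 < t by rewrite ltr_pdivlMr // mul1r.
have tk : forall k, 1 + k%:R * (t - 1) <= K / a 0.
  move=> k; apply: le_trans (bern t k (ltW t1)) _.
  rewrite ler_pdivlMr // /t expr_div_n mulrAC ler_pdivrMr ?exprn_gt0 //.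
  exact: le_trans (pw k) (bd k).
set b := K / a 0 / (t - 1).
have := tk (Num.Def.archi_bound b).
have hb : b < (Num.Def.archi_bound b)%:R.
  apply: archi_boundP; rewrite /b divr_ge0 ?subr_ge0 ?(ltW t1) //.
  by apply: (le_trans _ (tk 0%N)); rewrite mul0r addr0.
move: hb; rewrite /b ltr_pdivrMr ?subr_gt0 //.
set n := (Num.Def.archi_bound _)%:R; lra.
Qed.

Lemma msup_ge0 (E : set R) : (forall r, E r -> 0 <= r) -> 0 <= sup E.
Proof.
move=> h; have [hs|hs] := pselect (has_sup E); last by rewrite sup_out.
have [r Er] := hs.1; apply: le_trans (h r Er) _.
exact: sup_upper_bound.
Qed.

Lemma msup_le (E : set R) b : 0 <= b -> (forall r, E r -> r <= b) -> sup E <= b.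
Proof.
move=> b0 h; have [[r Er]|ne] := pselect (exists r, E r).
  by apply: ge_sup; [exists r | move=> u /h].
suff -> : E = set0 by rewrite sup0.
by apply/seteqP; split => // u Eu; apply: ne; exists u.
Qed.

Lemma mle_sup (E : set R) r b : E r -> (forall u, E u -> u <= b) -> r <= sup E.
Proof.
move=> Er h; apply: sup_upper_bound => //; split; first by exists r.
by exists b => u /h.
Qed.

End SeqLemma.

Set Implicit Arguments.

Section Herm.
Variables (R : realType) (H : lmodType R[i]) (ip : H -> H -> R[i]) (A : H -> H).
Hypothesis iplin : forall a x y z, ip (a *: x + y) z = a * ip x z + ip y z.
Hypothesis ipherm : forall x y, ip y x = conjc (ip x y).
Hypothesis Alin : forall a x y, A (a *: x + y) = a *: A x + A y.
Hypothesis Apos : forall x, 0 <= ip (A x) x.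

Local Notation f := (ipA ip A).

Lemma fA_lin a x y z : f (a *: x + y) z = a * f x z + f y z.
Proof. by rewrite /ipA Alin iplin. Qed.

Lemma fA_pos x : 0 <= f x x. Proof. exact: Apos. Qed.

Lemma fA_herm x y : f y x = conjc (f x y).
Proof.
have fDl' u v z : f (u + v) z = f u z + f v z := @fDl _ _ _ fA_lin u v z.
have fZl' a u z : f (a *: u) z = a * f u z := @fZl _ _ _ fA_lin a u z.
have fDr' u v z : f z (u + v) = f z u + f z v by rewrite /ipA (@fDr _ _ _ iplin ipherm).
have fZr' a u z : f z (a *: u) = conjc a * f z u by rewrite /ipA (@fZr _ _ _ iplin ipherm).
have cX : conjc (f x x) = f x x := @conj_ge0' _ _ (fA_pos _).
have cY : conjc (f y y) = f y y := @conj_ge0' _ _ (fA_pos _).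
have c1 : conjc (f (x + y) (x + y)) = f (x + y) (x + y) := @conj_ge0' _ _ (fA_pos _).
have c2 : conjc (f (x + 'i *: y) (x + 'i *: y)) = f (x + 'i *: y) (x + 'i *: y)
  := @conj_ge0' _ _ (fA_pos _).
rewrite fDl' !fDr' !conjcD cX cY in c1.
rewrite fDl' !fDr' !fZl' !fZr' !conjcD !conjcM cX cY conj_i !conjcN conj_i in c2.
set p := f x y in c1 c2 *; set r := f y x in c1 c2 *.
set X := f x x in c1 c2; set Y := f y y in c1 c2.
have E : (conjc p - r) *+ 2 * 'i =
  'i * ((X + conjc p + (conjc r + Y)) - (X + p + (r + Y))) +
  ((X + - - 'i * conjc p + (- 'i * conjc r + - 'i * (- - 'i * Y))) -
   (X + - 'i * p + ('i * r + 'i * (- 'i * Y)))) by ring.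
rewrite c1 c2 !subrr mulr0 addr0 in E.
have : (conjc p - r) *+ 2 = 0.
  apply/eqP; move/eqP: E; rewrite mulf_eq0 => /orP[//|].
  by move/eqP => /(congr1 (@complex.Im R)) /=; move/eqP; rewrite oner_eq0.
by move/eqP; rewrite mulrn_eq0 /= subr_eq0 => /eqP.
Qed.
End Herm.

Section Op.
Variables (R : realType) (H : lmodType R[i]) (ip : H -> H -> R[i]) (A T W : H -> H).
Variables (MA MT MW : R).
Hypothesis iplin : forall a x y z, ip (a *: x + y) z = a * ip x z + ip y z.
Hypothesis ipherm : forall x y, ip y x = conjc (ip x y).
Hypothesis ippos : forall x, 0 <= ip x x.
Hypothesis Alin : forall a x y, A (a *: x + y) = a *: A x + A y.
Hypothesis Apos : forall x, 0 <= ip (A x) x.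
Hypothesis Tlin : forall a x y, T (a *: x + y) = a *: T x + T y.
Hypotheses (MA0 : 0 <= MA) (MT0 : 0 <= MT) (MW0 : 0 <= MW).
Hypothesis Ab : forall x, nf ip (A x) <= MA * nf ip x.
Hypothesis Tb : forall x, nf ip (T x) <= MT * nf ip x.
Hypothesis Wb : forall x, nf ip (W x) <= MW * nf ip x.
Hypothesis adj : forall x y, ipA ip A (T x) y = ipA ip A x (W y).

Local Notation f := (ipA ip A).
Local Notation nA := (nf f).
Local Notation hn := (nf ip).

Let flin := fA_lin iplin Alin.
Let fherm := fA_herm iplin ipherm Alin Apos.
Let fpos : forall x, 0 <= f x x := fun x => Apos x.

Lemma nA_sq_le v : nA v ^+ 2 <= MA * hn v ^+ 2.
Proof.
rewrite (nf_sqE fpos); apply: le_trans (Re_le_cabs _) _.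
apply: le_trans (CSr iplin ipherm ippos _ _) _.
by rewrite expr2 mulrA ler_wpM2r ?nf_ge0.
Qed.

Local Notation S := (fun x => W (T x)).
Local Notation M := (MW * MT).

Lemma S_iter k x : hn (iter k S x) <= M ^+ k * hn x.
Proof.
elim: k => [|k IH]; first by rewrite expr0 mul1r.
rewrite iterS; apply: le_trans (Wb _) _.
have -> : M ^+ k.+1 * hn x = MW * (MT * (M ^+ k * hn x)) by rewrite exprS; ring.
rewrite ler_wpM2l //; apply: le_trans (Tb _) _.
by rewrite ler_wpM2l.
Qed.

Lemma S_adj u v : f (S u) v = f u (S v).
Proof. by rewrite fherm -adj -fherm -adj. Qed.

Lemma nA_logc k x :
  nA (iter k.+1 S x) ^+ 2 <= nA (iter k S x) * nA (iter k.+2 S x).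
Proof.
rewrite (nf_sqE fpos); apply: le_trans (Re_le_cabs _) _.
have e1 : iter k.+1 S x = S (iter k S x) by [].
have e2 : iter k.+2 S x = S (iter k.+1 S x) by [].
rewrite {1}e1 S_adj -e2.
exact: (CSr flin fherm fpos).
Qed.

Lemma S_bound x : nA (S x) <= M * nA x.
Proof.
have M0 : 0 <= M by rewrite mulr_ge0.
apply: (@seq_bound _ (fun k => nA (iter k S x)) (Num.sqrt MA * hn x) M M0).
- by move=> k; apply: nf_ge0.
- by move=> k /=; apply: nA_logc.
move=> k /=.
rewrite -(ler_pXn2r (n := 2)) ?nnegrE ?nf_ge0 ?mulr_ge0 ?exprn_ge0 ?sqrtr_ge0 ?nf_ge0 //.
apply: le_trans (nA_sq_le _) _.
rewrite -mulrA exprMn (sqr_sqrtr MA0) ler_wpM2l //.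
rewrite ler_pXn2r ?nnegrE ?nf_ge0 ?mulr_ge0 ?exprn_ge0 ?nf_ge0 //.
by rewrite mulrC; apply: S_iter.
Qed.

Lemma T_bound x : nA (T x) <= Num.sqrt M * nA x.
Proof.
have M0 : 0 <= M by rewrite mulr_ge0.
rewrite -(ler_pXn2r (n := 2)) ?nnegrE ?nf_ge0 ?mulr_ge0 ?sqrtr_ge0 ?nf_ge0 //.
rewrite (nf_sqE fpos) adj exprMn sqr_sqrtr //.
apply: le_trans (Re_le_cabs _) _; apply: le_trans (CSr flin fherm fpos _ _) _.
have := S_bound x; have := nf_ge0 f x; have := nf_ge0 f (S x).
set a := nA x; set b := nA (S x); nra.
Qed.

Hypothesis MAp : 0 < MA.

Let c := MA^-1.
Let c0 : 0 <= c. Proof. by rewrite invr_ge0 ltW. Qed.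
Let cMA : c * MA = 1. Proof. by rewrite mulVf // gt_eqF. Qed.

Let ipZl := fZl iplin.
Let ipBl := fBl iplin.
Let ipZr := fZr iplin ipherm.
Let ipBr := fBr iplin ipherm.
Let fZl' := fZl flin.
Let fBl' := fBl flin.
Let fZr' := fZr flin fherm.
Let fBr' := fBr flin fherm.

Lemma hA_le v : hn (A v) ^+ 2 <= MA * nA v ^+ 2.
Proof.
have h1 := CSr flin fherm fpos v (A v).
have e : f v (A v) = (hn (A v) ^+ 2)%:C := ffE ippos (A v).
rewrite e cabs_real ger0_norm ?exprn_ge0 ?nf_ge0 // in h1.
have h2 := nA_sq_le (A v).
have g0 := nf_ge0 f v; have g1 := nf_ge0 f (A v); have g2 := nf_ge0 ip (A v).
set h := hn (A v) ^+ 2 in h1 h2 *.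
have h0 : 0 <= h by rewrite exprn_ge0.
have : h * h <= (MA * nA v ^+ 2) * h.
  apply: le_trans (_ : (nA v * nA (A v)) ^+ 2 <= _).
    by rewrite -expr2 ler_pXn2r ?nnegrE ?mulr_ge0.
  rewrite exprMn; have h3 := ler_wpM2l (exprn_ge0 2 g0) h2.
  apply: le_trans h3 _; rewrite mulrA [_ * MA]mulrC; exact: lexx.
have [hp|] := boolP (0 < h); first by rewrite ler_pM2r.
by rewrite lt_def h0 andbT negbK => /eqP ->; rewrite mulr_ge0 ?exprn_ge0.
Qed.

Definition step v := v - c%:C *: A v.

Lemma step_h v : hn (step v) ^+ 2 <= hn v ^+ 2 - c * nA v ^+ 2.
Proof.
have e : (hn (step v) ^+ 2)%:C
    = (hn v ^+ 2 - (c * nA v ^+ 2) *+ 2 + c ^+ 2 * hn (A v) ^+ 2)%:C.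
  rewrite realC_comb (realCX c 2) -!(ffE ippos) -(ffE fpos).
  rewrite /step ipBl !ipBr !ipZl !ipZr conjc_real.
  have -> : ip v (A v) = f v v by rewrite ipherm; exact: (conj_ge0' (fpos v)).
  rewrite /ipA; ring.
have e2 := complexI e.
rewrite e2; have := hA_le v; have := c0.
set h := hn (A v) ^+ 2; set g := nA v ^+ 2 => cc hh.
have : c * c * h <= c * c * (MA * g) by rewrite ler_wpM2l ?mulr_ge0.
have -> : c * c * (MA * g) = c * g by rewrite mulrA -(mulrA c) cMA mulr1.
lra.
Qed.

Lemma step_g v : nA (step v) ^+ 2 <= nA v ^+ 2.
Proof.
have e : (nA (step v) ^+ 2)%:C
    = (nA v ^+ 2 - (c * hn (A v) ^+ 2) *+ 2 + c ^+ 2 * nA (A v) ^+ 2)%:C.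
  rewrite realC_comb (realCX c 2) -!(ffE fpos) -(ffE ippos).
  rewrite /step fBl' !fBr' !fZl' !fZr' conjc_real.
  have -> : f (A v) v = ip (A v) (A v).
    by rewrite fherm /ipA; exact: (conj_ge0' (ippos (A v))).
  rewrite {2}/ipA; ring.
have e2 := complexI e.
rewrite e2; have := hA_le v; have := nA_sq_le (A v); have := c0.
set h := hn (A v) ^+ 2; set g := nA v ^+ 2; set k := nA (A v) ^+ 2 => cc h1 h2.
have : c * c * k <= c * c * (MA * h) by rewrite ler_wpM2l ?mulr_ge0.
have -> : c * c * (MA * h) = c * h by rewrite mulrA -(mulrA c) cMA mulr1.
have : 0 <= c * h by rewrite mulr_ge0 ?exprn_ge0 ?nf_ge0.
lra.
Qed.

Lemma A0 : A 0 = 0.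
Proof.
have h := Alin (-1) 0 0.
rewrite scaleN1r oppr0 addr0 scaleN1r addNr in h; exact h.
Qed.

Lemma vn_range x n : exists y, x - iter n step x = A y.
Proof.
elim: n => [|n [y hy]]; first by exists 0; rewrite subrr A0.
exists (c%:C *: iter n step x + y).
by rewrite Alin -hy iterS /step opprB addrCA addrC.
Qed.

Lemma vn_bound x n :
  hn (iter n step x) ^+ 2 + c * n%:R * nA (iter n step x) ^+ 2 <= hn x ^+ 2.
Proof.
elim: n => [|n IH]; first by rewrite mulr0 mul0r addr0.
apply: le_trans IH; rewrite iterS.
have h1 := step_h (iter n step x); have h2 := step_g (iter n step x).
set a := nA (iter n step x) ^+ 2 in h1 h2 *.
set b := nA (step (iter n step x)) ^+ 2 in h1 h2 *.
have : c * n%:R * b <= c * n%:R * a by rewrite ler_wpM2l ?mulr_ge0.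
have : c * b <= c * a by rewrite ler_wpM2l.
rewrite -natr1 mulrDr mulr1 mulrDl; lra.
Qed.

Local Notation N := (opnormA ip A T).

Lemma N_ge0 : 0 <= N.
Proof.
apply: msup_ge0 => r [x [_ _ ->]]; by rewrite divr_ge0 ?nf_ge0.
Qed.

Lemma Tlin_add x y : T (x + y) = T x + T y.
Proof. by rewrite -[x]scale1r Tlin !scale1r. Qed.

Lemma K2 y : nA (T (A y)) <= N * nA (A y).
Proof.
set z := A y; set C := Num.sqrt M.
have [nz0|nzp] := eqVneq (nA z) 0.
  by have := T_bound z; rewrite nz0 !mulr0.
have nzp' : 0 < nA z by rewrite lt_def nzp nf_ge0.
have z0 : z <> 0 by move=> e; move: nzp; rewrite e (nf_zero flin) eqxx.
have key : nA (T z) / nA z <= N.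
  apply: (@mle_sup _ _ _ C).
    exists z; split => //.
    move=> e e0; exists y; rewrite subrr.
    by change (nf ip 0 < e); rewrite (nf_zero iplin).
  move=> u [x [_ _ ->]]; change (nA (T x) / nA x <= C).
  have [nx0|nxp] := eqVneq (nA x) 0.
    by rewrite nx0 invr0 mulr0 sqrtr_ge0.
  have nxp' : 0 < nA x by rewrite lt_def nxp nf_ge0.
  rewrite ler_pdivrMr //; exact: T_bound.
by move: key; rewrite ler_pdivrMr.
Qed.

Lemma Tkey z : nA (T z) <= N * nA z.
Proof.
apply/ler_addgt0Pr => e e0.
set C := Num.sqrt M.
have N0 := N_ge0; have C0 : 0 <= C by rewrite sqrtr_ge0.
set d := e / (N + C + 1).
have NC1 : 0 < N + C + 1 by lra.
have d0 : 0 < d by rewrite divr_gt0.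
have cp : 0 < c by rewrite invr_gt0.
set n := Num.Def.archi_bound (hn z ^+ 2 / (c * d ^+ 2)).
have hn_ : hn z ^+ 2 / (c * d ^+ 2) < n%:R.
  by apply: archi_boundP; rewrite divr_ge0 ?exprn_ge0 ?nf_ge0 // mulr_ge0 ?exprn_ge0 // ltW.
set v := iter n step z.
have hb := vn_bound z n; rewrite -/v in hb.
have gv : nA v ^+ 2 <= d ^+ 2.
  have cd0 : 0 < c * d ^+ 2 by rewrite mulr_gt0 // exprn_gt0.
  move: hn_; rewrite ltr_pdivrMr // => hn_.
  have g0 : 0 <= nA v ^+ 2 by rewrite exprn_ge0 ?nf_ge0.
  have h0 : 0 <= hn v ^+ 2 by rewrite exprn_ge0 ?nf_ge0.
  have n0 : 0 <= n%:R :> R by [].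
  have h : c * n%:R * nA v ^+ 2 <= c * n%:R * d ^+ 2 by lra.
  have [np|] := boolP (0 < c * n%:R); first by move: h; rewrite ler_pM2l.
  rewrite lt_def negb_and negbK mulr_ge0 ?(ltW cp) // orbF mulf_eq0 gt_eqF //= => /eqP en.
  by move: hn_; rewrite en mul0r ltNge exprn_ge0 ?nf_ge0.
have vd : nA v <= d.
  by rewrite -(ler_pXn2r (n := 2)) ?nnegrE ?nf_ge0 ?(ltW d0).
have [y hy] := vn_range z n; rewrite -/v in hy.
have ez : z = A y + v by rewrite -hy subrK.
have h1 : nA (T z) <= N * nA (A y) + C * nA v.
  rewrite ez Tlin_add; apply: le_trans (nfD flin fherm fpos _ _) _.
  by apply: lerD; [exact: K2 | exact: T_bound].
have h2 : nA (A y) <= nA z + nA v.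
  rewrite -hy; apply: le_trans (nfD flin fherm fpos _ _) _.
  by rewrite (nfN flin fherm fpos).
have h3 : (N + C) * d <= e.
  rewrite /d mulrA ler_pdivrMr //.
  by rewrite mulrC ler_wpM2l ?(ltW e0) // lerDl.
have := ler_wpM2l N0 h2; have := ler_wpM2l (addr_ge0 N0 C0) vd.
have := nf_ge0 f v.
nra.
Qed.

End Op.

Unset Implicit Arguments.
Set Strict Implicit.
Local Close Scope complex_scope.

Theorem mainTheorem3 (R : realType) (H : lmodType R[i]) (ip : H -> H -> R[i])
    (hH : is_hilbert ip)
    (A : H -> H) (hAb : bounded_op ip A) (hApos : positive_op ip A)
    (hdim : range_dim_ge2 A)
    (T : H -> H) (hT : in_BA ip A T)
    (q : R[i]) (hq : cabs q <= 1) :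
  wqA ip A q T <=
  Num.sqrt (cabs q ^+ 2 * wA ip A T ^+ 2
            + (1 - cabs q ^+ 2) * opnormA ip A T ^+ 2
            + 2 * cabs q * Num.sqrt (1 - cabs q ^+ 2) * wA ip A T * opnormA ip A T).
Proof.
case: hH => [[iplin ipherm ippos _] _].
case: hAb => [Alin [MA Ab]].
case: hT => [[Tlin [MT Tb]] [W [[_ [MW Wb]] adj]]].
have Ab' : forall x, nf ip (A x) <= (`|MA| + 1) * nf ip x.
  move=> x; apply: le_trans (Ab x) _; rewrite ler_wpM2r ?nf_ge0 //.
  by apply: le_trans (ler_norm _) _; rewrite lerDl.
have Tb' : forall x, nf ip (T x) <= `|MT| * nf ip x.
  by move=> x; apply: le_trans (Tb x) _; rewrite ler_wpM2r ?nf_ge0 ?ler_norm.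
have Wb' : forall x, nf ip (W x) <= `|MW| * nf ip x.
  by move=> x; apply: le_trans (Wb x) _; rewrite ler_wpM2r ?nf_ge0 ?ler_norm.
have MAp : 0 < `|MA| + 1 by rewrite ltr_wpDl.
have Tk := Tkey iplin ipherm ippos Alin hApos Tlin (ltW MAp) (normr_ge0 MT)
  (normr_ge0 MW) Ab' Tb' Wb' adj MAp.
have flin := fA_lin iplin Alin.
have fherm := fA_herm iplin ipherm Alin hApos.
have fpos : forall x, 0 <= ipA ip A x x := fun x => hApos x.
set f := ipA ip A in Tk flin fherm fpos *.
set w := wA ip A T; set N := opnormA ip A T.
have N0 : 0 <= N := N_ge0 ip A T.
have wub : forall z, nf f z = 1 -> cabs (f (T z) z) <= N.
  move=> z hz; apply: le_trans (CSr flin fherm fpos _ _) _.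
  by rewrite hz mulr1; apply: le_trans (Tk z) _; rewrite hz mulr1.
have w0 : 0 <= w by apply: msup_ge0 => r [z [_ ->]]; apply: cabs_ge0.
set cq := cabs q.
have cq0 : 0 <= cq := cabs_ge0 q.
have s0 : 0 <= 1 - cq ^+ 2 by rewrite subr_ge0 exprn_ile1.
set s := Num.sqrt (1 - cq ^+ 2).
have s2 : s ^+ 2 = 1 - cq ^+ 2 by rewrite sqr_sqrtr.
have sg0 : 0 <= s by rewrite sqrtr_ge0.
have -> : Num.sqrt (cq ^+ 2 * w ^+ 2 + (1 - cq ^+ 2) * N ^+ 2 + 2 * cq * s * w * N)
    = cq * w + s * N.
  rewrite -[RHS]ger0_norm ?addr_ge0 ?mulr_ge0 // -sqrtr_sqr; congr Num.sqrt.
  by rewrite -s2; ring.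
apply: msup_le; first by rewrite addr_ge0 ?mulr_ge0.
move=> r [x [y [nx ny qxy ->]]].
change (nf f x = 1) in nx; change (nf f y = 1) in ny; change (f x y = q) in qxy.
set u := y - conjc q *: x.
have fxx : f x x = 1 by rewrite (ffE fpos) nx expr1n.
have fyy : f y y = 1 by rewrite (ffE fpos) ny expr1n.
have fyx : f y x = conjc q by rewrite fherm qxy.
have nu : nf f u = s.
  apply: nf_uniq; first exact: sg0.
  rewrite s2 realCB /cq cabs_sqr /u.
  rewrite (fBl flin) !(fBr flin fherm) !(fZl flin) !(fZr flin fherm).
  rewrite fxx fyy fyx qxy conjcK; ring.
have ey : f (T x) y = q * f (T x) x + f (T x) u.
  by rewrite {1}(_ : y = conjc q *: x + u) ?(fDr flin fherm) ?(fZr flin fherm) ?conjcK // /u addrC subrK.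
change (cabs (f (T x) y) <= cq * w + s * N).
rewrite ey; apply: le_trans (cabsD _ _) _; rewrite cabsM -/cq.
have h1 : cabs (f (T x) x) <= w.
  by apply: (@mle_sup _ _ _ N); [exists x | move=> v [z [hz ->]]; apply: wub].
have h2 : cabs (f (T x) u) <= N * s.
  apply: le_trans (CSr flin fherm fpos _ _) _; rewrite nu ler_wpM2r //.
  by apply: le_trans (Tk x) _; rewrite nx mulr1.
have := cabs_ge0 (f (T x) x); nra.
Qed.
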